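(* Let $M\in\mathbb Z$, $s\in\{0,\dots,NL-1\}$ with $M\equiv s\bmod NL$, and $d,l$ non-negative integers with $l\ge d$. Then the linear map $\varrho^d_l:V^d_{s+lNL}\to\mathcal F^d_M$, $w\mapsto w\wedge|M-s-lNL\rangle$, is an isomorphism of vector spaces.
   Context: $N,L\ge2$. $V_{\rm aff}=\mathbb C[z,z^{-1}]\otimes\mathbb C^L\otimes\mathbb C^N$ with basis $u_k=z^{\underline k}\otimes\mathfrak v_{\dot k}\otimes\mathfrak u_{\bar k}$ ($k\in\mathbb Z$), where $k=\bar k-N(\dot k+L\underline k)$ uniquely with $\bar k\in\{1..N\}$, $\dot k\in\{1..L\}$, $\underline k\in\mathbb Z$. Wedges are antisymmetric; normally ordered wedges ($k_1>k_2>\cdots$) form bases. $\mathcal F_M$ has basis the normally ordered semi-infinite wedges $u_{k_1}\wedge u_{k_2}\wedge\cdots$ with $k_i=o_i:=M-i+1$ for all but finitely many $i$; $|K\rangle=u_K\wedge u_{K-1}\wedge\cdots$. Its degree is $\sum_i(\underline{o_i}-\underline{k_i})$ and $\mathcal F_M^d$ is the span of degree-$d$ wedges. $V_{s+lNL}$ is the span of normally ordered finite wedges $u_{k_1}\wedge\cdots\wedge u_{k_{s+lNL}}$ with $\underline{k_{s+lNL}}\le\underline{o_{s+lNL}}$ (with $V_0=\mathbb C$), graded by degree $\sum_{i=1}^{s+lNL}(\underline{o_i}-\underline{k_i})$; $V^d_{s+lNL}$ is the degree-$d$ component. *)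

(* Defs.v *)
From mathcomp Require Import all_boot all_order all_algebra.
From mathcomp Require Import reals complex.
From mathcomp Require Import finmap monalg.
Set Implicit Arguments. Unset Strict Implicit. Unset Printing Implicit Defensive.
Import Order.TTheory GRing.Theory Num.Theory.
Local Open Scope ring_scope.

(* Indexing of the basis u_k of V_aff = C[z,z^-1] (x) C^L (x) C^N, k in Z:    *)
(*   k = kbar - N (kdot + L kul),  kbar in {1..N}, kdot in {1..L}, kul in Z.  *)
(* (intdiv's %/ and %% are floor division / nonnegative remainder for a      *)
(*  positive divisor, so these are the unique such components.)             *)
Definition kbar (N : nat) (k : int) : int := ((k - 1) %% N%:Z)%Z + 1.
Definition kdot (N L : nat) (k : int) : int :=
  ((((kbar N k - k) %/ N%:Z)%Z - 1) %% L%:Z)%Z + 1.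
Definition kul (N L : nat) (k : int) : int :=
  ((((kbar N k - k) %/ N%:Z)%Z - kdot N L k) %/ L%:Z)%Z.

Definition o (M : int) (i : nat) : int := M - i%:Z + 1.

Definition normally_ordered (ks : seq int) : bool :=
  sorted (fun a b : int => b < a) ks.

(* A finite wedge u_{k_1} /\ ... /\ u_{k_n} is indexed by [:: k_1; ...; k_n]. *)
Definition fdeg (N L : nat) (M : int) (ks : seq int) : int :=
  \sum_(i < size ks) (kul N L (o M i.+1) - kul N L (nth 0 ks i)).

Definition V_basis (N L : nat) (M : int) (n : nat) (d : int) (ks : seq int)
  : bool :=
  [&& size ks == n, normally_ordered ks,
      (n == 0%N) || (kul N L (nth 0 ks n.-1) <= kul N L (o M n))
    & fdeg N L M ks == d].

(* The ambient space: finitely supported K-combinations of finite wedges. *)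
(* V^d_n = span of the basis wedges above. *)
Definition inV (K : fieldType) (N L : nat) (M : int) (n : nat) (d : int)
  (w : {malg K[seq int]}) : Prop :=
  forall ks, ks \in msupp w -> V_basis N L M n d ks.

(* A semi-infinite wedge u_{k_1} /\ u_{k_2} /\ ... with k_i = o_i for i > m  *)
(* is represented by the finite list p = [:: k_1; ...; k_m]:                 *)
Definition seminf (M : int) (p : seq int) (i : nat) : int :=
  if (i <= size p)%N then nth 0 p i.-1 else o M i.
Definition canonical (M : int) (p : seq int) : bool :=
  (size p == 0%N) || (nth 0 p (size p).-1 != o M (size p)).
Definition semi_normally_ordered (M : int) (p : seq int) : Prop :=
  forall i : nat, (1 <= i)%N -> seminf M p i.+1 < seminf M p i.
(* degree sum_i (ul(o_i) - ul(k_i)) (only i <= size p contribute) *)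
Definition sdeg (N L : nat) (M : int) (p : seq int) : int :=
  \sum_(1 <= i < (size p).+1) (kul N L (o M i) - kul N L (seminf M p i)).

Definition F_basis (N L : nat) (M : int) (d : int) (p : seq int) : Prop :=
  [/\ canonical M p, semi_normally_ordered M p & sdeg N L M p = d].

(* The Fock space F_M: finitely supported combinations of (representatives  *)
(* of) semi-infinite wedges; F^d_M = span of the degree-d basis wedges.    *)
Definition inF (K : fieldType) (N L : nat) (M : int) (d : int)
  (f : {malg K[seq int]}) : Prop :=
  forall p, p \in msupp f -> F_basis N L M d p.

Definition strip_step (M : int) (q : seq int) : seq int :=
  if (0 < size q)%N && (nth 0 q (size q).-1 == o M (size q))
  then take (size q).-1 q else q.
Definition strip (M : int) (q : seq int) : seq int :=
  iter (size q) (strip_step M) q.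

(* |K> = u_K /\ u_{K-1} /\ ... *)
(* For a normally ordered finite wedge ks with n factors and K = M - n:     *)
(*   u_{k_1} /\ ... /\ u_{k_n} /\ |M - n>                                    *)
(* is 0 if some k_i <= M - n (a repeated factor), and otherwise it is the   *)
(* normally ordered semi-infinite wedge k_1,...,k_n, M-n, M-n-1, ...        *)
(* (note o_{n+j} = M-n-j+1), i.e. the one represented by strip M ks.        *)
Definition wedge_vac_basis (K : fieldType) (M : int) (n : nat) (ks : seq int)
  : {malg K[seq int]} :=
  if normally_ordered ks && all (fun k => M - n%:Z < k) ks
  then << strip M ks >> else 0.

Definition rho (K : fieldType) (M : int) (n : nat) (w : {malg K[seq int]})
  : {malg K[seq int]} :=
  \sum_(ks <- msupp w) w@_ks *: wedge_vac_basis K M n ks.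

(* Main.v *)
Require Import Defs.
From mathcomp Require Import all_boot all_order all_algebra.
From mathcomp Require Import reals complex.
From mathcomp Require Import finmap monalg.
From mathcomp Require Import zify ring lra.
Import Order.TTheory GRing.Theory Num.Theory.
Local Open Scope ring_scope.

Definition ext (M : int) (n : nat) (p : seq int) : seq int :=
  p ++ map (fun i => o M i) (iota (size p).+1 (n - size p)).

Definition tailo (M : int) (q : seq int) (m : nat) : Prop :=
  [/\ (m <= size q)%N, canonical M (take m q) &
      forall i, (m <= i < size q)%N -> nth 0 q i = o M i.+1].

Lemma iter_fixp (T : Type) (f : T -> T) x j : f x = x -> iter j f x = x.
Proof. by move=> fx; elim: j => //= j ->. Qed.

Lemma strip_step_can M q : canonical M q -> strip_step M q = q.
Proof.
rewrite /canonical /strip_step => /orP [/eqP -> //|/negbTE ->].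
by rewrite andbF.
Qed.

Lemma strip_spec M q : exists m, tailo M q m /\ strip M q = take m q.
Proof.
rewrite /strip; move: (leqnn (size q)); move: {2 3}(size q) => j.
elim: j q => [|j IH] q.
  rewrite leqn0 => /nilP -> /=; exists 0%N; split => //.
move=> hs; rewrite iterSr.
case hc: (canonical M q).
  rewrite strip_step_can // iter_fixp ?strip_step_can //.
  exists (size q); rewrite take_size; split => //; split => //.
    by rewrite take_size.
  by move=> i /andP [a b]; move: (leq_trans b a); rewrite ltnn.
move: hc; rewrite /canonical /strip_step => /negbT; rewrite negb_or => /andP [hs0 /negbNE he].
have hs0' : (0 < size q)%N by rewrite lt0n.
rewrite hs0' he /=.
have hs' : (size (take (size q).-1 q) <= j)%N.
  by rewrite size_take ltn_predL hs0'; lia.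
case: (IH _ hs') => m [[hm hcan htail] ->].
have szt : size (take (size q).-1 q) = (size q).-1.
  by rewrite size_take ltn_predL hs0'.
rewrite szt in hm htail.
exists m; rewrite take_takel //; split => //; split.
- by apply: (leq_trans hm); exact: leq_pred.
- by move: hcan; rewrite take_takel.
- move=> i /andP [h1 h2].
  case: (ltnP i (size q).-1) => h3.
    by rewrite -(htail i) ?h1 // nth_take.
  have -> : i = (size q).-1 by move: h2 h3; case: (size q) => // k; rewrite ltnS /=; lia.
  by rewrite (eqP he) prednK.
Qed.
Lemma tailo_uniq M q m1 m2 : tailo M q m1 -> tailo M q m2 -> m1 = m2.
Proof.
wlog h12 : m1 m2 / (m1 <= m2)%N.
  move=> W h1 h2; case: (leqP m1 m2) => h; first exact: W.
  by apply/esym/W => //; exact: ltnW.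
move=> [h1 c1 t1] [h2 c2 t2].
case: (ltnP m1 m2) => h; last by apply/eqP; rewrite eqn_leq h12 h.
exfalso; move: c2; rewrite /canonical size_takel // nth_take; last first.
  by rewrite prednK //; exact: (leq_ltn_trans _ h).
rewrite t1; last by rewrite -ltnS prednK ?(leq_ltn_trans _ h) //= h /=;
  apply: (leq_trans _ h2); rewrite prednK // (leq_ltn_trans _ h).
by rewrite prednK ?(leq_ltn_trans _ h) // eqxx orbF; case: (m2) h.
Qed.

Arguments tailo_uniq {M q m1 m2}.

Lemma size_ext M n p : (size p <= n)%N -> size (ext M n p) = n.
Proof. by move=> h; rewrite /ext size_cat size_map size_iota subnKC. Qed.

Lemma nth_ext_lt M n p i : (i < size p)%N -> nth 0 (ext M n p) i = nth 0 p i.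
Proof. by move=> h; rewrite /ext nth_cat h. Qed.

Lemma nth_ext_ge M n p i : (size p <= i < n)%N -> nth 0 (ext M n p) i = o M i.+1.
Proof.
move=> /andP [h1 h2]; rewrite /ext nth_cat ltnNge h1 /=.
rewrite (nth_map 0%N); last by rewrite size_iota; lia.
by rewrite nth_iota; [congr o; lia | lia].
Qed.

Lemma tailo_ext M n p : (size p <= n)%N -> canonical M p -> tailo M (ext M n p) (size p).
Proof.
move=> h c; split; first by rewrite size_ext.
  by rewrite /ext take_size_cat.
by move=> i; rewrite size_ext // => hi; rewrite nth_ext_ge.
Qed.

Arguments tailo_ext {M n p}.

Lemma strip_ext M n p : (size p <= n)%N -> canonical M p -> strip M (ext M n p) = p.
Proof.
move=> h c; case: (strip_spec M (ext M n p)) => m [tm ->].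
rewrite (tailo_uniq tm (tailo_ext h c)).
by rewrite /ext take_size_cat.
Qed.

Lemma ext_strip M n q : size q = n -> ext M n (strip M q) = q.
Proof.
move=> hq; case: (strip_spec M q) => m [[hm c t] ->].
apply: (@eq_from_nth _ 0).
  by rewrite size_ext ?size_take_min ?hq //; exact: geq_minr.
have sz : size (take m q) = m by rewrite size_takel.
have hmn : (m <= n)%N by rewrite -hq.
move=> i; rewrite size_ext ?sz // => hi.
case: (ltnP i m) => him.
  by rewrite nth_ext_lt ?sz // nth_take.
by rewrite nth_ext_ge ?sz ?him // t // him hq.
Qed.

Lemma seminf_ext M n p i : (size p <= n)%N -> (1 <= i)%N ->
  seminf M (ext M n p) i = seminf M p i.
Proof.
move=> h hi; rewrite /seminf size_ext //.
case: (leqP i (size p)) => h1.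
  by rewrite (leq_trans h1 h) nth_ext_lt //; lia.
case: (leqP i n) => h2 //.
by rewrite nth_ext_ge; [congr o; lia | lia].
Qed.
Lemma kul_spec (N L : nat) (k : int) : (0 < N)%N -> (0 < L)%N ->
  (N * L)%N%:Z * kul N L k <= - k /\ - k < (N * L)%N%:Z * kul N L k + (N * L)%N%:Z.
Proof.
move=> N0 L0.
have hN : (N%:Z != 0) by rewrite eqz_nat -lt0n.
have hL : (L%:Z != 0) by rewrite eqz_nat -lt0n.
rewrite /kul /kdot /kbar.
set a := ((k - 1) %% N)%Z.
have ea := divz_eq (k - 1) N.
have a0 : 0 <= a by exact: modz_ge0.
have a1 : a < N by apply: ltz_pmod; rewrite ltz_nat.
set x := ((k - 1) %/ N)%Z in ea.
have -> : a + 1 - k = (- x) * N by nia.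
rewrite mulzK //.
set q := - x.
set b := ((q - 1) %% L)%Z.
have eb := divz_eq (q - 1) L.
have b0 : 0 <= b by exact: modz_ge0.
have b1 : b < L by apply: ltz_pmod; rewrite ltz_nat.
set c := ((q - 1) %/ L)%Z in eb.
have -> : q - (b + 1) = c * L by nia.
rewrite mulzK //.
rewrite PoszM.
split; nia.
Qed.

Section Arith.
Variables (N L : nat).
Hypotheses (hN : (0 < N)%N) (hL : (0 < L)%N).
Local Notation P := ((N * L)%N%:Z).

Lemma P_gt0 : 0 < P.
Proof. by rewrite ltz_nat muln_gt0 hN hL. Qed.

Lemma kul_eq k j : P * j <= - k -> - k < P * j + P -> kul N L k = j.
Proof.
move=> h1 h2; case: (kul_spec N L k hN hL) => h3 h4; have hP := P_gt0.
apply/eqP; rewrite eq_le; apply/andP; split.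
  by rewrite -ltzD1; nia.
by rewrite -ltzD1; nia.
Qed.

Lemma kul_mono a b : a <= b -> kul N L b <= kul N L a.
Proof.
move=> hab; case: (kul_spec N L a hN hL) => h1 h2; case: (kul_spec N L b hN hL) => h3 h4.
have hP := P_gt0; rewrite -ltzD1; nia.
Qed.

Lemma kul_Pu u : kul N L (P * u) = - u.
Proof. by apply: kul_eq; have hP := P_gt0; nia. Qed.

Lemma kul_Pu1 u : kul N L (P * u + 1) = - u - 1.
Proof. by apply: kul_eq; have hP := P_gt0; nia. Qed.

Lemma kul_gt u k : kul N L k <= kul N L (P * u + 1) -> P * u < k.
Proof.
move=> h; rewrite ltNge; apply/negP => hk.
have := kul_mono _ _ hk; rewrite kul_Pu; move: h; rewrite kul_Pu1; lia.
Qed.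

Lemma kul_gt' u k : P * u < k -> kul N L k <= kul N L (P * u + 1).
Proof. by move=> h; apply: kul_mono; lia. Qed.

End Arith.

Lemma seminf_nth M q i : (i < size q)%N -> seminf M q i.+1 = nth 0 q i.
Proof. by move=> h; rewrite /seminf h. Qed.

Lemma sdeg_nth N L M p :
  sdeg N L M p = \sum_(0 <= i < size p) (kul N L (o M i.+1) - kul N L (nth 0 p i)).
Proof.
rewrite /sdeg big_add1 /=; apply: eq_big_nat => i /andP [_ hi].
by rewrite seminf_nth.
Qed.

Lemma fdeg_ext N L M n p : (size p <= n)%N ->
  Defs.fdeg N L M (ext M n p) = sdeg N L M p.
Proof.
move=> h; rewrite /Defs.fdeg sdeg_nth size_ext // -(big_mkord xpredT
  (fun i => kul N L (o M i.+1) - kul N L (nth 0 (ext M n p) i))).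
rewrite (big_cat_nat (leq0n (size p)) h) /=.
rewrite [X in _ + X]big1_seq ?addr0.
  by apply: eq_big_nat => i /andP [_ hi]; rewrite nth_ext_lt.
move=> i /andP [_]; rewrite mem_index_iota => hi.
by rewrite nth_ext_ge // subrr.
Qed.

Lemma o_succ M i : o M i.+1 = o M i - 1.
Proof. rewrite /o; lia. Qed.

Lemma gt_trans : transitive (fun a b : int => b < a).
Proof. by move=> y x z h1 h2; exact: lt_trans h2 h1. Qed.

Section Main.
Variables (N L : nat) (M : int) (s l d : nat) (u : int).
Hypotheses (hN : (0 < N)%N) (hL : (0 < L)%N).
Local Notation P := ((N * L)%N%:Z).
Local Notation n := (s + l * (N * L))%N.
Hypothesis hu : M - n%:Z = P * u.

Lemma on1 : o M n = P * u + 1.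
Proof. by rewrite /o hu. Qed.

Lemma on2 : o M n.+1 = P * u.
Proof. by rewrite o_succ on1; lia. Qed.

Lemma Vb_all ks : V_basis N L M n d%:Z ks -> all (fun k => M - n%:Z < k) ks.
Proof.
case/and4P => /eqP hs hno hk _.
case: (posnP n) => hn0.
  by move: hs; rewrite hn0 => /size0nil ->.
move: hk; rewrite (negbTE (lt0n_neq0 hn0)) /= on1 => /(kul_gt _ _ hN hL) hlast.
apply/(all_nthP 0) => i hi; rewrite hu.
case: (ltnP i n.-1) => h.
  apply: (lt_trans hlast).
  have := sorted_ltn_nth gt_trans 0 hno; move=> /(_ i n.-1); rewrite !inE hs.
  by apply => //; [rewrite -hs | rewrite ltn_predL].
suff -> : i = n.-1 by [].
by apply/eqP; rewrite eqn_leq h andbT -ltnS prednK // -hs.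
Qed.

Lemma Vb_gt ks : V_basis N L M n d%:Z ks -> forall i, (i < n)%N -> P * u < nth 0 ks i.
Proof.
move=> hV i hi; have := Vb_all _ hV; rewrite -hu => /(all_nthP 0); apply.
by case/and4P: hV => /eqP ->.
Qed.

Lemma strip_size q : (size (strip M q) <= size q)%N.
Proof. by case: (strip_spec M q) => m [[hm _ _] ->]; rewrite size_takel. Qed.

Lemma strip_can q : canonical M (strip M q).
Proof. by case: (strip_spec M q) => m [[_ c _] ->]. Qed.

Lemma Vb_F ks : V_basis N L M n d%:Z ks -> F_basis N L M d%:Z (strip M ks).
Proof.
move=> hV; have := hV; case/and4P => /eqP hs hno hk /eqP hd.
have hsz : (size (strip M ks) <= n)%N by rewrite -hs strip_size.
have hext : ext M n (strip M ks) = ks by rewrite ext_strip.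
split.
- exact: strip_can.
- move=> i hi; rewrite -(seminf_ext _ _ _ i hsz hi) -(seminf_ext _ _ _ i.+1 hsz) // hext.
  rewrite /seminf hs.
  case: (ltnP i n) => h1.
    rewrite ltnW //=.
    have := sorted_ltn_nth gt_trans 0 hno; move=> /(_ i.-1 i); rewrite !inE hs.
    by rewrite prednK //; apply => //; exact: ltnW.
  case: (leqP i n) => h2.
    have -> : i = n by apply/eqP; rewrite eqn_leq h1 h2.
    rewrite on2; apply: Vb_gt => //; rewrite ltn_predL; exact: (leq_trans hi h2).
  by rewrite o_succ; lia.
- by rewrite -(fdeg_ext _ _ _ _ _ hsz) hext hd.
Qed.

Lemma Vb_inj ks1 ks2 : V_basis N L M n d%:Z ks1 -> V_basis N L M n d%:Z ks2 ->
  strip M ks1 = strip M ks2 -> ks1 = ks2.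
Proof.
case/and4P => /eqP h1 _ _ _; case/and4P => /eqP h2 _ _ _ e.
by rewrite -(ext_strip M _ _ h1) -(ext_strip M _ _ h2) e.
Qed.


Lemma sum_ge0_nat (F : nat -> int) a b :
  (forall i, (a <= i < b)%N -> 0 <= F i) -> 0 <= \sum_(a <= i < b) F i.
Proof. move=> h; rewrite big_nat_cond; apply: sumr_ge0 => i /andP [hi _]; exact: h. Qed.

Lemma nth_ext_seminf p i : (size p <= n)%N -> (i < n)%N ->
  nth 0 (ext M n p) i = seminf M p i.+1.
Proof.
move=> hs hi; rewrite -(seminf_nth M) ?size_ext // seminf_ext //.
Qed.

Lemma F_Vb p : F_basis N L M d%:Z p -> (size p <= n)%N -> V_basis N L M n d%:Z (ext M n p).
Proof.
move=> [c hno hdeg] hs; apply/and4P; split.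
- by rewrite size_ext.
- apply/(sortedP 0) => i; rewrite size_ext // => hi.
  rewrite !nth_ext_seminf //; last exact: ltnW.
  exact: hno.
- case: (posnP n) => hn0; first by rewrite hn0.
  apply/orP; right; rewrite on1; apply: (kul_gt' _ _ hN hL _ _).
  rewrite nth_ext_seminf //; last by rewrite ltn_predL.
  rewrite prednK //.
  have := hno n hn0; rewrite {1}/seminf ltnNge hs /=.
  by rewrite on2.
- by rewrite fdeg_ext // hdeg.
Qed.

Lemma F_size p : (d <= l)%N -> F_basis N L M d%:Z p -> (size p <= n)%N.
Proof.
move=> hdl [c hno hdeg]; rewrite leqNgt; apply/negP => hlt.
set m := size p in hlt.
have hm0 : (0 < m)%N by apply: leq_ltn_trans hlt.
have sm1 : seminf M p m.+1 = o M m.+1 by rewrite /seminf ltnn.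
have G1 : forall k, (k < m)%N -> o M (m - k) < seminf M p (m - k).
  elim=> [|k IH] hk.
    rewrite subn0; have := hno m hm0; rewrite sm1 o_succ.
    move: c; rewrite /canonical -/m (negbTE (lt0n_neq0 hm0)) /= => /eqP.
    rewrite /seminf leqnn; move: (o M m) (nth 0 p m.-1) => x y; lia.
  have := IH (ltnW hk); have := hno (m - k.+1)%N; rewrite subn_gt0 => /(_ hk).
  have -> : (m - k.+1).+1 = (m - k)%N by lia.
  have -> : o M (m - k) = o M (m - k.+1) - 1.
    by rewrite -o_succ; congr o; lia.
  lia.
have G1' : forall i, (1 <= i <= m)%N -> o M i < seminf M p i.
  move=> i /andP [h1 h2]; have := G1 (m - i)%N; rewrite subKn //; apply; lia.
pose F := fun i => kul N L (o M i) - kul N L (seminf M p i).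
have G2 : forall i, (1 <= i)%N -> 0 <= F i.
  move=> i hi; rewrite /F subr_ge0; case: (leqP i m) => h.
    by apply: (kul_mono _ _ hN hL); apply: ltW; apply: G1'; rewrite hi h.
  by rewrite /seminf leqNgt h.
have G3 : forall j, (s + 1 + j * (N * L) <= m)%N ->
    1 <= F (s + 1 + j * (N * L))%N.
  move=> j hj; rewrite /F.
  have eo : o M (s + 1 + j * (N * L)) = P * (u + l%:Z - j%:Z).
    by rewrite /o; move: hu; rewrite !PoszD !PoszM; nia.
  have hs := G1' _ (introT andP (conj (leq_trans (leq_addl s 1) (leq_addr _ _)) hj)).
  rewrite eo in hs *; rewrite (kul_Pu _ _ hN hL).
  have := kul_gt' _ _ hN hL _ _ hs; rewrite (kul_Pu1 _ _ hN hL); lia.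
have hP1 : (1 <= N * L)%N by rewrite muln_gt0 hN hL.
have G4 : forall j, (s + 1 + j * (N * L) <= m)%N ->
    (j.+1)%:Z <= \sum_(1 <= i < (s + 1 + j * (N * L)).+1) F i.
  elim=> [|j IH] hj.
    have h := G3 0%N hj; move: hj h; rewrite mul0n addn0 => hj h.
    rewrite big_nat_recr /=; last by rewrite addn1.
    have := sum_ge0_nat F 1 (s + 1) (fun i hi => G2 i (proj1 (andP hi))).
    move: h; move: (\sum_(1 <= i < s + 1) F i) (F (s + 1)%N) => x y.
    move=> h1 h2; have : (0 + 1 <= x + y)%R by apply: lerD. by rewrite add0r.
  set a := (s + 1 + j * (N * L))%N.
  set b := (s + 1 + j.+1 * (N * L))%N.
  have hab : (a + N * L = b)%N by rewrite /a /b mulSn; lia.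
  have hab' : (a < b)%N by rewrite -hab; move: hP1; clear; lia.
  have ham : (a <= m)%N by apply: leq_trans (ltnW hab') hj.
  rewrite (@big_cat_nat _ _ _ a.+1) //=; last by rewrite ltnS ltnW.
  rewrite [X in _ + X]big_nat_recr //=.
  have h1 : (j.+1)%:Z <= \sum_(1 <= i < a.+1) F i := IH ham.
  have h2 := sum_ge0_nat F a.+1 b (fun i hi => G2 i (leq_trans (ltn0Sn a) (proj1 (andP hi)))).
  have h3 : 1 <= F b by exact: G3 j.+1 hj.
  move: h1 h2 h3; move: (\sum_(1 <= i < a.+1) F i) (\sum_(a.+1 <= i < b) F i) (F b) => x y z.
  move=> h1 h2 h3; have : ((j.+2)%:Z <= (x:int) + ((y:int) + (z:int)))%R by lia.
  by [].
have e : (s + 1 + l * (N * L) = n.+1)%N by lia.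
have H := G4 l; rewrite e in H; have {}H := H hlt.
move: hdeg; rewrite /sdeg -/m.
rewrite (eq_big_nat _ _ (F2 := F)) // (@big_cat_nat _ _ _ n.+2) //=.
have h2 := sum_ge0_nat F n.+2 m.+1 (fun i hi => G2 i (leq_trans (ltn0Sn n.+1) (proj1 (andP hi)))).
move: H h2; move: (\sum_(1 <= i < n.+2) F i) (\sum_(n.+2 <= i < m.+1) F i) => x y h1 h2 h3.
have : ((x : int) + (y : int) = d%:Z)%R by [].
move: hdl; clear -h1 h2; lia.
Qed.

End Main.
Arguments Vb_all {N L M s l d u} hN hL hu {ks}.
Arguments Vb_inj {N L M s l d ks1 ks2}.
Arguments Vb_F {N L M s l d u} hN hL hu {ks}.
Arguments F_Vb {N L M s l d u} hN hL hu {p}.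
Arguments F_size {N L M s l d u} hN hL hu {p}.


Section Malg.
Variable K : fieldType.

Lemma coefZU (S : seq (seq int)) (c : seq int -> K) (g : seq int -> seq int) q :
  (\sum_(x <- S) c x *: << g x >> : {malg K[seq int]})@_q = \sum_(x <- S) c x * (g x == q)%:R.
Proof.
rewrite (@raddf_sum _ _ (mcoeff q)); apply: eq_bigr => x _.
have h := @mcoeffZ _ K (c x) <<g x>> q.
apply: etrans; first exact: h.
by rewrite mcoeffU.
Qed.

Lemma coef_ex (S : seq (seq int)) (c : seq int -> K) (g : seq int -> seq int) q :
  (\sum_(x <- S) c x *: << g x >> : {malg K[seq int]})@_q != 0 ->
  exists2 x, x \in S & g x = q.
Proof.
rewrite coefZU => h.
case: (boolP (has (fun x => g x == q) S)) => [/hasP [x hx /eqP e]|hn]; first by exists x.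
move: h; rewrite big1_seq ?eqxx // => x hx.
have : ~~ (g x == q) by apply: contra hn => e; apply/hasP; exists x.
by move/negbTE => ->; rewrite mulr0.
Qed.

Lemma coef_exact (S : seq (seq int)) (c : seq int -> K) (g : seq int -> seq int) x0 :
  uniq S -> (forall x, x \in S -> g x = g x0 -> x = x0) -> (x0 \notin S -> c x0 = 0) ->
  (\sum_(x <- S) c x *: << g x >> : {malg K[seq int]})@_(g x0) = c x0.
Proof.
move=> hu hinj hc; rewrite coefZU.
case: (boolP (x0 \in S)) => hx0.
  rewrite (bigD1_seq x0) //= eqxx mulr1 big1_seq ?addr0 // => x /andP [hne hx].
  case: eqP => [e|_]; last by rewrite mulr0.
  by move: hne; rewrite (hinj x hx e) eqxx.
rewrite big1_seq ?hc // => x /andP [_ hx].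
case: eqP => [e|_]; last by rewrite mulr0.
by move: hx0; rewrite -(hinj x hx e) hx.
Qed.

End Malg.
Arguments coef_ex {K S c g q}.

Section Final.
Variables (K : fieldType) (N L : nat) (M : int) (s l d : nat) (u : int).
Hypotheses (hN : (0 < N)%N) (hL : (0 < L)%N).
Local Notation P := ((N * L)%N%:Z).
Local Notation n := (s + l * (N * L))%N.
Hypothesis hu : M - n%:Z = P * u.

Lemma rhoE (w : {malg K[seq int]}) : inV N L M n d%:Z w ->
  rho M n w = \sum_(ks <- msupp w) w@_ks *: << strip M ks >>.
Proof.
move=> hw; apply: eq_big_seq => ks hks.
have hV := hw ks hks.
rewrite /wedge_vac_basis (Vb_all hN hL hu hV).
by case/and4P: hV => _ -> _ _.
Qed.

Lemma rho_coef (w : {malg K[seq int]}) ks : inV N L M n d%:Z w ->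
  V_basis N L M n d%:Z ks -> (rho M n w)@_(strip M ks) = w@_ks.
Proof.
move=> hw hks; rewrite rhoE //; apply: coef_exact.
- exact: fset_uniq.
- by move=> x hx e; apply: (Vb_inj (hw x hx) hks e).
- exact: mcoeff_outdom.
Qed.

End Final.
Arguments rhoE {K N L M s l d u} hN hL hu {w}.
Arguments rho_coef {K N L M s l d u} hN hL hu {w ks}.

Theorem proposition3p3 (R : realType) (N L : nat) (M : int) (s d l : nat) :
  (2 <= N)%N -> (2 <= L)%N -> (s < N * L)%N ->
  (M = s%:Z %[mod (N * L)%N%:Z])%Z -> (d <= l)%N ->
  let n := (s + l * (N * L))%N in
  [/\ (forall w : {malg R[i][seq int]}, inV N L M n d%:Z w -> inF N L M d%:Z (rho M n w)),
      (forall w1 w2 : {malg R[i][seq int]}, inV N L M n d%:Z w1 -> inV N L M n d%:Z w2 ->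
         rho M n w1 = rho M n w2 -> w1 = w2)
    & (forall f : {malg R[i][seq int]}, inF N L M d%:Z f ->
         exists2 w, inV N L M n d%:Z w & rho M n w = f)].
Proof.
move=> hN2 hL2 hsNL hM hdl n.
have hN : (0 < N)%N by apply: leq_trans hN2.
have hL : (0 < L)%N by apply: leq_trans hL2.
have [u hu] : exists u, M - n%:Z = (N * L)%N%:Z * u.
  exists ((M %/ (N * L)%N%:Z)%Z - (s%:Z %/ (N * L)%N%:Z)%Z - l%:Z).
  have e1 := divz_eq M (N * L)%N%:Z; have e2 := divz_eq s (N * L)%N%:Z.
  move: hM e1 e2; rewrite /n PoszD PoszM.
  move: (M %/ (N * L)%N%:Z)%Z (s%:Z %/ (N * L)%N%:Z)%Z (M %% (N * L)%N%:Z)%Z (s%:Z %% (N * L)%N%:Z)%Z.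
  move=> a b c e -> e1 e2; rewrite PoszM; nia.
split.
- move=> w hw p; rewrite (rhoE hN hL hu hw) -mcoeff_neq0 => /coef_ex [ks hks <-].
  exact: (Vb_F hN hL hu (hw ks hks)).
- move=> w1 w2 h1 h2 e; apply/malgP => k.
  case: (boolP (k \in msupp w1)) => k1.
    have hV := h1 k k1.
    by rewrite -(rho_coef hN hL hu h1 hV) e (rho_coef hN hL hu h2 hV).
  case: (boolP (k \in msupp w2)) => k2.
    have hV := h2 k k2.
    by rewrite -(rho_coef hN hL hu h1 hV) e (rho_coef hN hL hu h2 hV).
  by rewrite !mcoeff_outdom.
- move=> f hf.
  pose w := (\sum_(p <- msupp f) f@_p *: << ext M n p >> : {malg R[i][seq int]}).
  have hfs : forall p, p \in msupp f -> (size p <= n)%N.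
    by move=> p hp; exact: (F_size hN hL hu hdl (hf p hp)).
  have hw : inV N L M n d w.
    move=> ks; rewrite -mcoeff_neq0 => /coef_ex [p hp <-].
    exact: (F_Vb hN hL hu (hf p hp) (hfs p hp)).
  exists w => //; apply/malgP => q.
  case: (boolP (q \in msupp f)) => hq.
    have hc : canonical M q by case: (hf q hq).
    have hV := F_Vb hN hL hu (hf q hq) (hfs q hq).
    rewrite -{1}(strip_ext _ _ _ (hfs q hq) hc) (rho_coef hN hL hu hw hV).
    rewrite /w; apply: coef_exact.
    - exact: fset_uniq.
    - move=> x hx e.
      have hcx : canonical M x by case: (hf x hx).
      by rewrite -(strip_ext _ _ _ (hfs x hx) hcx) e (strip_ext _ _ _ (hfs q hq) hc).
    - by rewrite hq.
  rewrite (mcoeff_outdom hq); apply/eqP/negPn/negP => hne.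
  rewrite (rhoE hN hL hu hw) in hne.
  case: (coef_ex hne) => ks; rewrite -mcoeff_neq0 => /coef_ex [p hp ep] e.
  have hcp : canonical M p by case: (hf p hp).
  move: hq; rewrite -e -ep strip_ext //; [by rewrite hp | exact: hfs].
Qed.
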